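(* Let $G$ and $G'$ be graphs on the same vertex set $V$ such that $G'$ is obtained from $G$ by a single swap, i.e. there are distinct vertices $a,b,c,d$ with $ab,cd\in E(G)$, $ac,bd\notin E(G)$, and $E(G')=(E(G)\setminus\{ab,cd\})\cup\{ac,bd\}$. Then $|\mu(G)-\mu(G')|\le 1$.
   Context: All graphs are finite and simple. For a graph $G=(V,E)$ on $n$ vertices, a fractional vertex cover is a function $f:V\to[0,\infty)$ with $f(u)+f(v)\ge 1$ for every edge $uv\in E$; $\tau^*(G)$ denotes the minimum of $\sum_{v\in V}f(v)$ over all fractional vertex covers. For $E'\subseteq E$ let $G-E'=(V,E\setminus E')$. Define $\mu(G)=\min\{|E'| : E'\subseteq E,\ \tau^*(G-E')<n/2\}$. *)

(* Defs.v *)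
From HB Require Import structures.
From mathcomp Require Import all_boot all_order all_algebra.
From mathcomp Require Import boolp classical_sets reals.
Set Implicit Arguments. Unset Strict Implicit. Unset Printing Implicit Defensive.
Import Order.TTheory GRing.Theory Num.Theory.
Local Open Scope ring_scope.

(* A graph on the vertex set T (a finType) is given by its edge set
   E : {set {set T}}; it is simple iff every edge is a 2-element subset. *)
Definition simple_graph (T : finType) (E : {set {set T}}) : Prop :=
  forall e, e \in E -> #|e| = 2%N.

Definition frac_cover (R : realType) (T : finType) (E : {set {set T}})
  (f : T -> R) : Prop :=
  (forall v, 0 <= f v) /\
  (forall u v, [set u; v] \in E -> 1 <= f u + f v).

Definition tau_star (R : realType) (T : finType) (E : {set {set T}}) : R :=
  inf (fun t : R => exists f : T -> R, frac_cover E f /\ t = \sum_(v : T) f v).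

(* mu(G) = min { |E'| : E' \subset E, tau*(G - E') < n/2 }.
   (Default #|E|.+1 if no such E' exists, which cannot happen when n >= 1.) *)
Definition mu (R : realType) (T : finType) (E : {set {set T}}) : nat :=
  \big[minn/#|E|.+1]_(E' : {set {set T}} |
      (E' \subset E) && `[< tau_star R (E :\: E') < (#|T|%:R / 2 : R) >])
    #|E'|.

(* Main.v *)
Require Import Defs.
From HB Require Import structures.
From mathcomp Require Import all_boot all_order all_algebra.
From mathcomp Require Import boolp classical_sets reals.
From mathcomp Require Import zify.
Import Order.TTheory GRing.Theory Num.Theory.

Section S.
Set Implicit Arguments. Unset Strict Implicit. Unset Printing Implicit Defensive.
Local Open Scope ring_scope.
Variables (R : realType) (T : finType).

Lemma tau_le (X : {set {set T}}) (f : T -> R) :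
  frac_cover X f -> tau_star R X <= \sum_v f v.
Proof.
move=> fc; apply: ge_inf; last by exists f.
exists 0 => t [g [[g0 _] ->]]; exact: sumr_ge0.
Qed.

Lemma tau_lt (X : {set {set T}}) (r : R) :
  tau_star R X < r -> exists f : T -> R, frac_cover X f /\ \sum_v f v < r.
Proof.
move=> /inf_lt[].
  exists (\sum_(v : T) (1:R)), (fun _ => 1); split => //; split => // u v _.
  by rewrite lerDl.
by move=> t [f [fc ->]] lt; exists f.
Qed.

Lemma pair_eq (u v x y : T) : [set u; v] = [set x; y] ->
  (u = x /\ v = y) \/ (u = y /\ v = x).
Proof.
move=> e.
have hu : u \in [set x; y] by rewrite -e !inE eqxx.
have hv : v \in [set x; y] by rewrite -e !inE eqxx orbT.
have hx : x \in [set u; v] by rewrite e !inE eqxx.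
have hy : y \in [set u; v] by rewrite e !inE eqxx orbT.
move: hu hv hx hy; rewrite !inE.
by do 4 (case/orP=> /eqP ?); subst; auto.
Qed.
Lemma step (E F : {set {set T}}) (a b c d : T) :
  [set a;b] \in E -> [set c;d] \in E -> [set a;c] \notin E -> [set b;d] \notin E ->
  F \subset E -> tau_star R (E :\: F) < #|T|%:R / 2 ->
  exists F' : {set {set T}}, F' \subset ((E :\: [set [set a;b];[set c;d]]) :|: [set [set a;c];[set b;d]])
    /\ (#|F'| <= #|F|.+1)%N
    /\ tau_star R (((E :\: [set [set a;b];[set c;d]]) :|: [set [set a;c];[set b;d]]) :\: F')
       < #|T|%:R / 2.
Proof.
move=> Eab Ecd Eac Ebd FE /tau_lt [f [fc fs]].
set X := [set [set a;b];[set c;d]].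
set Y := [set [set a;c];[set b;d]].
set U := (if f a + f c < 1 then [set [set a;c]] else finset.set0) :|: (if f b + f d < 1 then [set [set b;d]] else finset.set0).
exists ((F :\: X) :|: U); split; last split.
- apply/fintype.subsetP => e; rewrite !inE => /orP[/andP[eX eF]|].
    by rewrite eX (fintype.subsetP FE _ eF).
  by rewrite /U; case: ifP => _; case: ifP => _; rewrite ?inE => /orP[] // /eqP ->; rewrite eqxx ?orbT.
- have h1 : (#|(F :\: X) :|: U| <= #|F :\: X| + #|U|)%N by apply: leq_card_setU.
  have h2 : (#|U| <= (f a + f c < 1)%R + (f b + f d < 1)%R)%N.
    apply: leq_trans (leq_card_setU _ _) _.
    by case: ifP => _; case: ifP => _; rewrite ?cards1 ?cards0.
  have h3 : (#|F :\: X| <= #|F|)%N by apply: subset_leq_card; apply: subsetDl.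
  have h4 : (f a + f c < 1) -> (f b + f d < 1) -> (#|F :\: X| < #|F|)%N.
    move=> hA hB; rewrite cardsD.
    suff : (0 < #|F :&: X|)%N.
      have : (#|F :&: X| <= #|F|)%N by apply: subset_leq_card; apply: subsetIl.
      lia.
    apply/fintype.card_gt0P.
    case: (boolP ([set a;b] \in F)) => hab; first by exists [set a;b]; rewrite !inE hab eqxx.
    case: (boolP ([set c;d] \in F)) => hcd; first by exists [set c;d]; rewrite !inE hcd eqxx orbT.
    have h5 : 1 <= f a + f b by apply: fc.2; rewrite inE hab Eab.
    have h6 : 1 <= f c + f d by apply: fc.2; rewrite inE hcd Ecd.
    exfalso.
    have : f a + f c + (f b + f d) < 1 + 1 by apply: ltrD.
    have : 1 + 1 <= f a + f b + (f c + f d) by apply: lerD.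
    rewrite -!addrA (addrCA (f b)) (addrCA (f c)) (addrCA (f b)) => h h'.
    by move: (le_lt_trans h h'); rewrite ltxx.
  move: h1 h2 h3 h4; case: (f a + f c < 1); case: (f b + f d < 1) => /=; try lia.
- apply: le_lt_trans fs; apply: tau_le; split; first exact: fc.1.
  move=> u v; rewrite !inE => /andP[nF /orP[/andP[nX eE]|eY]].
    apply: fc.2; rewrite inE eE andbT; apply: contra nF => eF.
    by rewrite eF nX.
  case/orP: eY => /eqP e.
    case: (pair_eq e) => [[-> ->]|[-> ->]]; rewrite ?(addrC (f c));
    rewrite leNgt; apply/negP => hA; move: nF; rewrite /U hA !inE -e eqxx ?orbT //.
  case: (pair_eq e) => [[-> ->]|[-> ->]]; rewrite ?(addrC (f d));
  rewrite leNgt; apply/negP => hB; move: nF; rewrite /U hB !inE -e eqxx ?orbT //.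
Qed.

Lemma bigmin_le_seq (I : eqType) (s : seq I) (g : I -> nat) x0 i :
  i \in s -> (\big[minn/x0]_(j <- s) g j <= g i)%N.
Proof.
elim: s => // j s IH; rewrite in_cons big_cons => /orP[/eqP ->|/IH h].
  exact: geq_minl.
exact: leq_trans (geq_minr _ _) h.
Qed.

Lemma mu_le (E F : {set {set T}}) :
  F \subset E -> tau_star R (E :\: F) < #|T|%:R / 2 -> (mu R E <= #|F|)%N.
Proof.
move=> FE lt; rewrite /mu -big_filter; apply: bigmin_le_seq.
by rewrite mem_filter mem_index_enum FE andbT /=; apply/asboolP.
Qed.

Lemma mu_ge (E : {set {set T}}) (k : nat) :
  (forall F : {set {set T}}, F \subset E -> tau_star R (E :\: F) < #|T|%:R / 2 -> (k <= #|F|.+1)%N) ->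
  (k <= #|E|.+2)%N -> (k <= (mu R E).+1)%N.
Proof.
move=> h hE; rewrite /mu; apply: (big_ind (fun x => k <= x.+1)%N) => //.
  by move=> x y hx hy; rewrite /minn; case: ifP.
by move=> F /andP[FE /asboolP]; apply: h.
Qed.

Lemma tau_empty (E : {set {set T}}) : (0 < #|T|)%N -> tau_star R (E :\: E) < #|T|%:R / 2.
Proof.
move=> n0; apply: (@le_lt_trans _ _ (\sum_(v : T) (fun _ => 0 : R) v)).
  apply: tau_le; split => // u v; by rewrite finset.setDv inE.
by rewrite big1 // divr_gt0 // ltr0n.
Qed.

Lemma main_dir (E : {set {set T}}) (a b c d : T) :
  (0 < #|T|)%N ->
  [set a;b] \in E -> [set c;d] \in E -> [set a;c] \notin E -> [set b;d] \notin E ->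
  (mu R ((E :\: [set [set a;b];[set c;d]]) :|: [set [set a;c];[set b;d]]) <= (mu R E).+1)%N.
Proof.
move=> n0 Eab Ecd Eac Ebd.
have key : forall F : {set {set T}}, F \subset E -> tau_star R (E :\: F) < #|T|%:R / 2 ->
   (mu R ((E :\: [set [set a;b];[set c;d]]) :|: [set [set a;c];[set b;d]]) <= #|F|.+1)%N.
  move=> F FE lt; have [F' [h1 [h2 h3]]] := step Eab Ecd Eac Ebd FE lt.
  exact: leq_trans (mu_le h1 h3) h2.
apply: mu_ge => //.
by apply: leq_trans (key E (subxx _) (tau_empty E n0)) _.
Qed.
End S.

Theorem lemma12 (R : realType) (T : finType) (E E' : {set {set T}})
  (a b c d : T) :
  simple_graph E ->
  uniq [:: a; b; c; d] ->
  [set a; b] \in E -> [set c; d] \in E ->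
  [set a; c] \notin E -> [set b; d] \notin E ->
  E' = (E :\: [set [set a; b]; [set c; d]]) :|: [set [set a; c]; [set b; d]] ->
  (mu R E <= (mu R E').+1)%N /\ (mu R E' <= (mu R E).+1)%N.
Proof.
move=> _ /= hu Eab Ecd Eac Ebd ->.
have n0 : (0 < #|T|)%N by apply/fintype.card_gt0P; exists a.
split; last exact: main_dir.
move: hu; rewrite !inE !negb_or => /and4P[/and3P[ab ac ad] /andP[bc bd] cd _].
have ne : forall x y z w : T, [set x; y] = [set z; w] -> x \in [set z; w].
  by move=> x y z w <-; rewrite !inE eqxx.
set E2 := (E :\: _) :|: _.
have E2ac : [set a; c] \in E2.
by rewrite /E2 !inE eqxx !orbT.
have E2bd : [set b; d] \in E2 by rewrite /E2 !inE eqxx !orbT.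
have k1 : forall x y z w : T, [set x; y] = [set z; w] -> x != z -> x != w -> False.
  move=> x y z w e; have : x \in [set z; w] by rewrite -e !inE eqxx.
  by rewrite !inE => /orP[] /eqP ->; rewrite eqxx // orbT.
have k2 : forall x y z w : T, [set x; y] = [set z; w] -> y != z -> y != w -> False.
  move=> x y z w e; apply: (k1 y x z w); by rewrite finset.setUC e.
have E2ab : [set a; b] \notin E2.
  rewrite /E2 !inE eqxx /= negb_or; apply/andP; split; apply/eqP => e.
    by apply: (k2 _ _ _ _ e); rewrite // eq_sym.
  exact: (k1 _ _ _ _ e).
have E2cd : [set c; d] \notin E2.
  rewrite /E2 !inE eqxx orbT /= negb_or; apply/andP; split; apply/eqP => e.
    by apply: (k2 _ _ _ _ e); rewrite eq_sym.
  by apply: (k1 _ _ _ _ e); rewrite // eq_sym.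
have := main_dir R n0 E2ac E2bd E2ab E2cd.
suff -> : (E2 :\: [set [set a; c]; [set b; d]]) :|: [set [set a; b]; [set c; d]] = E by [].
have hXE : forall e, e \in [set [set a; b]; [set c; d]] -> e \in E.
  by move=> e; rewrite !inE => /orP[] /eqP ->.
have hYE : forall e, e \in [set [set a; c]; [set b; d]] -> e \notin E.
  by move=> e; rewrite !inE => /orP[] /eqP ->.
apply/setP => e; rewrite /E2 finset.in_setU finset.in_setD finset.in_setU finset.in_setD.
case: (boolP (e \in [set [set a; b]; [set c; d]])) => hX; first by rewrite orbT; rewrite (hXE _ hX).
case: (boolP (e \in [set [set a; c]; [set b; d]])) => hY /=; first by rewrite (negbTE (hYE _ hY)).
by rewrite !orbF.
Qed.
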